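(* The projectors $\hat P_g$, $g\in G$, onto the isotypes of $\hat U$ satisfy the Knill–Laflamme condition diagonally: $\Pi_{\rm pn}\hat P_g\hat P_{g'}\Pi_{\rm pn}=\frac1{2^{n-k}}\delta_{g,g'}\Pi_{\rm pn}$ for all $g,g'\in G$.
   Context: Let $n\ge1$, $0\le k<n$, $\mathcal{H}_{\rm kin}=(\mathbb{C}^2)^{\otimes n}$, $G=\mathbb{Z}_2^{\times(n-k)}$, and $U:G\to\mathcal{P}_n$, $g\mapsto U^g$, a faithful unitary representation into the $n$-qubit Pauli group with $-I\notin U(G)$ (stabilizer code); $\Pi_{\rm pn}=\frac1{|G|}\sum_gU^g$ is the projector onto the code space. $\hat G$ is the group of characters $\chi:G\to\{\pm1\}$. Let $\hat U:\hat G\to\mathrm{Aut}(\mathcal{H}_{\rm kin})$, $\chi\mapsto\hat U^\chi$, be a unitary representation dual to $U$, i.e. $U^g\hat U^\chi=\chi(g)\hat U^\chi U^g$ for all $g,\chi$, and for $g\in G$ let $\hat P_g=\frac1{2^{n-k}}\sum_{\chi\in\hat G}\chi(g)\hat U^\chi$ (the orthogonal projector onto the isotype of $\hat U$ labeled by $g$). *)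

(* Defs.v *)
From HB Require Import structures.
From mathcomp Require Import all_boot all_order all_algebra all_field.
From mathcomp Require Import spectral mxtens.
Set Implicit Arguments. Unset Strict Implicit. Unset Printing Implicit Defensive.
Import Order.TTheory GRing.Theory Num.Theory.
Local Open Scope ring_scope.

Definition pauli1 (a : 'I_4) : 'M[algC]_2 :=
  \matrix_(i < 2, j < 2)
    match nat_of_ord a with
    | 0%N => if i == j then 1 else 0
    | 1%N => if i == j then 0 else 1
    | 2%N => if i == j then 0 else (if nat_of_ord i == 0%N then - 'i else 'i)
    | _ => if i == j then (if nat_of_ord i == 0%N then 1 else -1) else 0
    end.

Fixpoint pauli_string (n : nat) (f : nat -> 'I_4) : 'M[algC]_(2 ^ n) :=
  match n return 'M[algC]_(2 ^ n) with
  | 0%N => 1%:M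
  | m.+1 => castmx (esym (expnS 2 m), esym (expnS 2 m))
              (pauli1 (f 0%N) *t pauli_string m (fun i => f i.+1))
  end.

Definition in_pauli_group (n : nat) (M : 'M[algC]_(2 ^ n)) : Prop :=
  exists (c : 'I_4) (f : nat -> 'I_4), M = ('i ^+ c) *: pauli_string n f.

Definition Zgrp (m : nat) := 'rV['F_2]_m.

(* Characters chi : G -> {+1,-1}.  A map G -> {+1,-1} is encoded as a boolean
   finite function (true <-> -1); [chival chi g] is its value in C. *)
Definition chival (m : nat) (chi : {ffun Zgrp m -> bool}) (g : Zgrp m) : algC :=
  (-1) ^+ chi g.

Definition is_character (m : nat) (chi : {ffun Zgrp m -> bool}) : bool :=
  [forall g, forall h, chival chi (g + h) == chival chi g * chival chi h].

Definition dual_group (m : nat) : {set {ffun Zgrp m -> bool}} :=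
  [set chi | is_character chi].

Definition chi_mul (m : nat) (chi1 chi2 : {ffun Zgrp m -> bool})
  : {ffun Zgrp m -> bool} := [ffun g => chi1 g (+) chi2 g].

Definition Pi_pn (N m : nat) (U : Zgrp m -> 'M[algC]_N) : 'M[algC]_N :=
  (#|{: Zgrp m}|%:R)^-1 *: \sum_(g : Zgrp m) U g.

Definition hatP (N m : nat) (hatU : {ffun Zgrp m -> bool} -> 'M[algC]_N)
  (g : Zgrp m) : 'M[algC]_N :=
  ((2 ^ m)%:R)^-1 *: \sum_(chi in dual_group m) chival chi g *: hatU chi.

(* Main.v *)
Require Import Defs.
From HB Require Import structures.
From mathcomp Require Import all_boot all_order all_algebra all_field.
From mathcomp Require Import spectral mxtens.
Import Order.TTheory GRing.Theory Num.Theory.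
Local Open Scope ring_scope.
Set Implicit Arguments. Unset Strict Implicit.

Lemma F2add (x y : 'F_2) : ((x + y) != 0) = (x != 0) (+) (y != 0).
Proof. by case: x => [[|[|x]] hx]; case: y => [[|[|y]] hy]. Qed.
Lemma F2opp (x : 'F_2) : - x = x.
Proof. by case: x => [[|[|x]] hx]; apply/val_inj. Qed.

Lemma chival_mul m (a b : {ffun Zgrp m -> bool}) g :
  chival (chi_mul a b) g = chival a g * chival b g.
Proof. by rewrite /chival /chi_mul ffunE; case: (a g); case: (b g); rewrite ?expr0 ?expr1 ?mulr1 ?mul1r ?mulrNN ?mulr1. Qed.

Lemma dual_mul m (a b : {ffun Zgrp m -> bool}) :
  a \in dual_group m -> b \in dual_group m -> chi_mul a b \in dual_group m.
Proof.
rewrite !inE => /forallP ha /forallP hb; apply/forallP => g; apply/forallP => h.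
move: (ha g) (hb g) => /forallP/(_ h)/eqP ea /forallP/(_ h)/eqP eb.
by rewrite !chival_mul ea eb; apply/eqP; rewrite mulrACA.
Qed.

Definition chi0 m : {ffun Zgrp m -> bool} := [ffun _ => false].

Lemma chival0 m g : chival (chi0 m) g = 1.
Proof. by rewrite /chival ffunE expr0. Qed.

Lemma chi0_dual m : chi0 m \in dual_group m.
Proof. by rewrite inE; apply/forallP => g; apply/forallP => h; rewrite !chival0 mulr1. Qed.

Lemma chi_mulK m (a b : {ffun Zgrp m -> bool}) : chi_mul a (chi_mul a b) = b.
Proof. by apply/ffunP => x; rewrite !ffunE addbA addbb. Qed.

Lemma chival_char m (c : {ffun Zgrp m -> bool}) g h : c \in dual_group m ->
  chival c (g + h) = chival c g * chival c h.
Proof. by rewrite inE => /forallP/(_ g)/forallP/(_ h)/eqP. Qed.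

Lemma cardG m : #|{: Zgrp m}| = (2 ^ m)%N.
Proof. by rewrite card_mx card_Fp // mul1n. Qed.

Lemma algC_half (S : algC) : S = - S -> S = 0.
Proof.
move=> h; have : S *+ 2 = 0 by rewrite mulr2n {1}h addNr.
by rewrite -mulr_natr => /eqP; rewrite mulf_eq0 pnatr_eq0 orbF => /eqP.
Qed.

Lemma sum_chi_G m (c : {ffun Zgrp m -> bool}) : c \in dual_group m ->
  \sum_(g : Zgrp m) chival c g = if c == chi0 m then #|{: Zgrp m}|%:R else 0.
Proof.
move=> hc; case: eqP => [->|ne].
  by under eq_bigr do rewrite chival0; rewrite sumr_const.
have [g0 hg0] : exists g0, c g0.
  case: (boolP [exists x, c x]) => [/existsP //|/existsPn h]; exfalso; apply: ne; apply/ffunP => x.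
  by rewrite ffunE; apply/negbTE/h.
apply: algC_half.
rewrite [LHS](reindex_inj (addIr g0)) /=.
under eq_bigr do rewrite chival_char //.
by rewrite -mulr_suml /chival hg0 expr1 mulrN1.
Qed.

Lemma exists_chi m (g : Zgrp m) : g != 0 ->
  exists2 c, c \in dual_group m & c g.
Proof.
move=> ng; have [i hi] : exists i, g 0 i != 0.
  case: (boolP [exists i, g 0 i != 0]) => [/existsP //|/existsPn h]; exfalso; move/eqP: ng; apply.
  apply/matrixP => a b; rewrite mxE (ord1 a); exact/eqP/negPn/h.
exists [ffun h : Zgrp m => h 0 i != 0]; last by rewrite ffunE.
rewrite inE; apply/forallP => x; apply/forallP => y.
rewrite /chival !ffunE mxE F2add.
by case: (x 0 i != 0); case: (y 0 i != 0); rewrite ?expr0 ?expr1 ?mulr1 ?mul1r ?mulrNN ?mulr1.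
Qed.

Lemma chival_0 m (c : {ffun Zgrp m -> bool}) : c \in dual_group m -> chival c 0 = 1.
Proof.
move=> hc; have := chival_char 0 0 hc; rewrite addr0 /chival.
by case: (c 0); rewrite ?expr1 ?expr0 ?mulrNN ?mulr1.
Qed.

Lemma sum_chi_D m (g : Zgrp m) :
  \sum_(c in dual_group m) chival c g = if g == 0 then #|dual_group m|%:R else 0.
Proof.
case: eqP => [->|/eqP ng].
  by rewrite -sumr_const; apply: eq_bigr => c hc; rewrite chival_0.
have [c1 hc1 hg] := exists_chi ng.
apply: algC_half.
rewrite [LHS](reindex_inj (can_inj (@chi_mulK m c1))) /=.
rewrite (eq_bigl (fun c => c \in dual_group m)); last first.
  move=> c; apply/idP/idP => h; last exact: dual_mul.
  by rewrite -(chi_mulK c1 c); apply: dual_mul.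
rewrite -sumrN; apply: eq_bigr => c _.
by rewrite chival_mul /chival hg expr1 mulN1r.
Qed.

Lemma card_dual m : #|dual_group m| = #|{: Zgrp m}|.
Proof.
have : \sum_(g : Zgrp m) \sum_(c in dual_group m) chival c g
     = \sum_(c in dual_group m) \sum_(g : Zgrp m) chival c g by rewrite exchange_big.
rewrite (bigD1 (0 : Zgrp m)) //= [X in _ + X = _]big1; last first.
  by move=> g ng; rewrite sum_chi_D (negbTE ng).
rewrite [RHS](bigD1 (chi0 m)) ?chi0_dual //= [X in _ = _ + X]big1; last first.
  by move=> c /andP[hc nc]; rewrite sum_chi_G // (negbTE nc).
rewrite sum_chi_D sum_chi_G ?chi0_dual // !eqxx !addr0 => /eqP.
by rewrite eqr_nat => /eqP.
Qed.

Lemma hatU0 N m (hatU : {ffun Zgrp m -> bool} -> 'M[algC]_N)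
  (hatU_hom : forall chi1 chi2, chi1 \in dual_group m ->
      chi2 \in dual_group m ->
      hatU (chi_mul chi1 chi2) = hatU chi1 *m hatU chi2)
  (hatU_unitary : forall chi, chi \in dual_group m -> hatU chi \is unitarymx) :
  hatU (chi0 m) = 1%:M.
Proof.
have e : chi_mul (chi0 m) (chi0 m) = chi0 m by apply/ffunP => x; rewrite !ffunE.
have h := hatU_hom _ _ (chi0_dual m) (chi0_dual m); rewrite e in h.
have /unitarymxP hu := hatU_unitary _ (chi0_dual m).
rewrite -[LHS]mulmx1 -hu mulmxA -h.
done.
Qed.

Lemma F2rowopp m (g : Zgrp m) : - g = g.
Proof. by apply/matrixP => i j; rewrite mxE F2opp. Qed.

Lemma addeq0 m (g g' : Zgrp m) : (g + g' == 0) = (g == g').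
Proof. by rewrite -{1}(F2rowopp g') subr_eq0. Qed.

Lemma hatP_mul N m (hatU : {ffun Zgrp m -> bool} -> 'M[algC]_N)
  (hatU_hom : forall chi1 chi2, chi1 \in dual_group m ->
      chi2 \in dual_group m ->
      hatU (chi_mul chi1 chi2) = hatU chi1 *m hatU chi2) g g' :
  hatP hatU g *m hatP hatU g' = (g == g')%:R *: hatP hatU g'.
Proof.
rewrite /hatP -scalemxAl -scalemxAr scalerA mulmx_suml.
have inner : forall c, c \in dual_group m ->
   (chival c g *: hatU c) *m (\sum_(c' in dual_group m) chival c' g' *: hatU c')
   = \sum_(p in dual_group m) (chival c g * chival c g' * chival p g') *: hatU p.
  move=> c hc; rewrite mulmx_sumr.
  rewrite (reindex_inj (can_inj (@chi_mulK m c))) /=.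
  rewrite (eq_bigl (fun c => c \in dual_group m)); last first.
    move=> p; apply/idP/idP => h; last exact: dual_mul.
    by rewrite -(chi_mulK c p); apply: dual_mul.
  apply: eq_bigr => p hp.
  rewrite -scalemxAl -scalemxAr scalerA -hatU_hom ?dual_mul // chi_mulK chival_mul.
  by rewrite mulrA.
rewrite (eq_bigr _ inner) exchange_big /=.
under eq_bigr do rewrite -scaler_suml -mulr_suml.
have hs : \sum_(c in dual_group m) chival c g * chival c g' = if g == g' then (2 ^ m)%:R else 0.
  rewrite (eq_bigr (fun c => chival c (g + g'))); last by move=> c hc; rewrite chival_char.
  by rewrite sum_chi_D addeq0 card_dual cardG.
under eq_bigr do rewrite hs.
have nz : (2 ^ m)%:R != 0 :> algC by rewrite pnatr_eq0 expn_eq0.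
case: eqP => _.
  rewrite (eq_bigr (fun i => (2^m)%:R *: (chival i g' *: hatU i))) => [|i _]; last by rewrite scalerA.
  by rewrite -scaler_sumr !scalerA divfK // mul1r.
under eq_bigr do rewrite mul0r scale0r.
by rewrite big1_eq scaler0 scale0r.
Qed.

Lemma sumU_mul N m (U : Zgrp m -> 'M[algC]_N)
  (U_hom : forall g h, U (g + h) = U g *m U h) (a : Zgrp m -> algC) :
  (\sum_h a h *: U h) *m (\sum_l U l) = (\sum_h a h) *: \sum_l U l.
Proof.
rewrite mulmx_suml scaler_suml; apply: eq_bigr => h _.
rewrite -scalemxAl mulmx_sumr; congr (_ *: _).
rewrite [RHS](reindex_inj (addrI h)) /=.
by apply: eq_bigr => l _; rewrite U_hom.
Qed.

Lemma PiUPi N m (U : Zgrp m -> 'M[algC]_N)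
  (hatU : {ffun Zgrp m -> bool} -> 'M[algC]_N)
  (U_hom : forall g h, U (g + h) = U g *m U h)
  (hatU0 : hatU (chi0 m) = 1%:M)
  (dual : forall g chi, chi \in dual_group m ->
      U g *m hatU chi = chival chi g *: (hatU chi *m U g)) c :
  c \in dual_group m ->
  Pi_pn U *m hatU c *m Pi_pn U = (c == chi0 m)%:R *: Pi_pn U.
Proof.
move=> hc; rewrite /Pi_pn -scalemxAl mulmx_suml.
under eq_bigr do rewrite dual // scalemxAr.
rewrite -mulmx_sumr -scalemxAl -scalemxAr -mulmxA sumU_mul // sum_chi_G //.
have nz : #|{: Zgrp m}|%:R != 0 :> algC by rewrite pnatr_eq0 cardG expn_eq0.
case: eqP => [->|_]; last by rewrite scale0r mulmx0 !scaler0 (_ : false%:R = 0) // scale0r.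
by rewrite hatU0 mul1mx !scalerA divfK // mul1r.
Qed.

Lemma PhatPP N m (hatU : {ffun Zgrp m -> bool} -> 'M[algC]_N) (P : 'M[algC]_N)
  (hP : forall c, c \in dual_group m -> P *m hatU c *m P = (c == chi0 m)%:R *: P) g :
  P *m hatP hatU g *m P = ((2 ^ m)%:R)^-1 *: P.
Proof.
rewrite /hatP -scalemxAr -scalemxAl mulmx_sumr mulmx_suml.
rewrite (eq_bigr (fun c => (chival c g * (c == chi0 m)%:R) *: P)); last first.
  by move=> c hc; rewrite -scalemxAr -scalemxAl hP // scalerA.
rewrite (bigD1 (chi0 m)) ?chi0_dual //= big1 => [|c /andP[_ /negbTE ->]]; last first.
  by rewrite mulr0 scale0r.
by rewrite eqxx chival0 mulr1 scale1r addr0.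
Qed.

Unset Implicit Arguments.
Set Strict Implicit.

Theorem mainTheorem15 (n k : nat) (hn : (1 <= n)%N) (hk : (k < n)%N)
  (U : Zgrp (n - k) -> 'M[algC]_(2 ^ n))
  (hatU : {ffun Zgrp (n - k) -> bool} -> 'M[algC]_(2 ^ n))
  (* U is a faithful unitary representation of G into the Pauli group *)
  (U_hom : forall g h, U (g + h) = U g *m U h)
  (U_unitary : forall g, U g \is unitarymx)
  (U_pauli : forall g, in_pauli_group (U g))
  (U_faithful : injective U)
  (U_noMinusI : forall g, U g != - 1%:M)
  (* hatU is a unitary representation of the dual group *)
  (hatU_hom : forall chi1 chi2, chi1 \in dual_group (n - k) ->
      chi2 \in dual_group (n - k) ->
      hatU (chi_mul chi1 chi2) = hatU chi1 *m hatU chi2)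
  (hatU_unitary : forall chi, chi \in dual_group (n - k) -> hatU chi \is unitarymx)
  (* duality relation U^g hatU^chi = chi(g) hatU^chi U^g *)
  (dual : forall g chi, chi \in dual_group (n - k) ->
      U g *m hatU chi = chival chi g *: (hatU chi *m U g)) :
  forall g g' : Zgrp (n - k),
    Pi_pn U *m hatP hatU g *m hatP hatU g' *m Pi_pn U
    = (((2 ^ (n - k))%:R)^-1 * (g == g')%:R) *: Pi_pn U.
Proof.
move=> g g'.
have h0 := hatU0 hatU_hom hatU_unitary.
have hP : forall c, c \in dual_group (n - k) ->
  Pi_pn U *m hatU c *m Pi_pn U = (c == chi0 (n - k))%:R *: Pi_pn U.
  by move=> c hc; apply: PiUPi.
move: hP; generalize (Pi_pn U) => P hP.
rewrite -(mulmxA P) hatP_mul // -scalemxAr -scalemxAl.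
by rewrite (PhatPP hP) scalerA mulrC.
Qed.
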